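(* Let $S$ be a monoid, let $r_h$ be a Hoehnke radical of $S$-acts, and let $r_k$ be the Kurosh–Amitsur radical determined by the radical class $\mathbb{R}_{r_h}$, i.e. $r_k(A)=\bigvee\{\rho\in\mathrm{Con}(A): \rho \text{ a Rees congruence with } \Sigma_\rho\subseteq\mathbb{R}_{r_h}\}$ (so that $\mathbb{R}_{r_k}=\mathbb{R}_{r_h}$). Then, with respect to the order $r\le r'$ iff $r(A)\subseteq r'(A)$ for every $S$-act $A$: (1) $r_k=\bigvee\{r: r \text{ is a Kurosh–Amitsur radical with } r\le r_h\}$; (2) $r_k=\bigwedge\{r: r \text{ is a Hoehnke radical with } \mathbb{R}_r=\mathbb{R}_{r_h}\}$.
   Context: An $S$-act over a monoid $S$ is a set $A$ with an action $(s,a)\mapsto sa$ satisfying $s(ta)=(st)a$ and $1a=a$; homomorphisms are action-preserving maps. An $S$-act is trivial if $|A|\le1$. $\mathrm{Con}(A)$ is the lattice of congruences on $A$, with least $\Delta_A$ and greatest $\nabla_A=A\times A$. A Rees congruence is a congruence each of whose classes is a subact or a singleton; $\Sigma_\rho$ is the set of classes of $\rho$ that are non-trivial subacts. For a class $\mathbb{C}$, a $\mathbb{C}$-system of $A$ is a set of pairwise disjoint non-trivial subacts of $A$ each in $\mathbb{C}$. A (normal) Hoehnke radical is an assignment $r$ giving each $S$-act $A$ a congruence $r(A)$ such that (i) for every homomorphism $f:A\to B$, $(a,a')\in r(A)$ implies $(f(a),f(a'))\in r(B)$, and (ii) $r(A/r(A))=\Delta_{A/r(A)}$. Its radical class is $\mathbb{R}_r=\{A: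 r(A)=\nabla_A\}$. A Hoehnke radical $r$ is Kurosh–Amitsur if (i) every $r(A)$ is a Rees congruence; (ii) $r(B)=\nabla_B$ for all $B\in\Sigma_{r(A)}$; (iii) for every $\mathbb{R}_r$-system $\Sigma$ of $A$ and every $B\in\Sigma$ there is $C\in\Sigma_{r(A)}$ with $B\le C$. *)

(* Defs.v *)
From Stdlib Require Import FunctionalExtensionality PropExtensionality ProofIrrelevance.
Set Implicit Arguments.
Unset Strict Implicit.

Record monoid := Monoid {
  mcar :> Type;
  mmul : mcar -> mcar -> mcar;
  mone : mcar;
  mmulA : forall x y z, mmul x (mmul y z) = mmul (mmul x y) z;
  mmul1l : forall x, mmul mone x = x;
  mmul1r : forall x, mmul x mone = x }.

Record act (S : monoid) := Act {
  acar :> Type;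
  actf : S -> acar -> acar;
  actA : forall s t a, actf s (actf t a) = actf (mmul s t) a;
  act1 : forall a, actf (mone S) a = a }.
Arguments actf {S} _ _ _.

Section Acts.
Variable S : monoid.

Definition is_hom (A B : act S) (f : A -> B) : Prop :=
  forall s a, f (actf A s a) = actf B s (f a).

Definition is_congruence (A : act S) (rho : A -> A -> Prop) : Prop :=
  (forall a, rho a a) /\ (forall a b, rho a b -> rho b a) /\
  (forall a b c, rho a b -> rho b c -> rho a c) /\
  (forall s a b, rho a b -> rho (actf A s a) (actf A s b)).

Definition rel_eq (X : Type) (r r' : X -> X -> Prop) : Prop :=
  forall x y, r x y <-> r' x y.

Definition cls (A : act S) (rho : A -> A -> Prop) (a : A) : A -> Prop := rho a.

(* P is (the carrier of) a subact: closed under the action *)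
Definition closed (A : act S) (P : A -> Prop) : Prop :=
  forall s x, P x -> P (actf A s x).

Definition nontrivial (A : Type) (P : A -> Prop) : Prop :=
  exists x y, P x /\ P y /\ x <> y.

Definition sub_actf (A : act S) (P : A -> Prop) (H : closed P)
  (s : S) (x : {x : A | P x}) : {x : A | P x} :=
  exist _ (actf A s (proj1_sig x)) (H s _ (proj2_sig x)).

Lemma sub_actA (A : act S) (P : A -> Prop) (H : closed P) s t x :
  sub_actf H s (sub_actf H t x) = sub_actf H (mmul s t) x.
Proof.
destruct x as [x hx]; unfold sub_actf; simpl.
apply eq_sig_hprop; [intros; apply proof_irrelevance|]; simpl; apply actA.
Qed.

Lemma sub_act1 (A : act S) (P : A -> Prop) (H : closed P) x :
  sub_actf H (mone S) x = x.
Proof.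
destruct x as [x hx]; unfold sub_actf; simpl.
apply eq_sig_hprop; [intros; apply proof_irrelevance|]; simpl; apply act1.
Qed.

Definition subact (A : act S) (P : A -> Prop) (H : closed P) : act S :=
  @Act S {x : A | P x} (sub_actf H) (@sub_actA A P H) (@sub_act1 A P H).

(* Quotient act A/rho, carrier = set of rho-classes *)
Definition qcar (A : act S) (rho : A -> A -> Prop) : Type :=
  {P : A -> Prop | exists a, forall x, P x <-> rho a x}.

Definition qact_pred (A : act S) (rho : A -> A -> Prop) (s : S) (P : A -> Prop) : A -> Prop :=
  fun x => exists a, P a /\ rho (actf A s a) x.

Lemma qact_ok (A : act S) (rho : A -> A -> Prop) (Hc : is_congruence rho)
  (s : S) (P : qcar rho) :
  exists a, forall x, qact_pred rho s (proj1_sig P) x <-> rho a x.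
Proof.
destruct P as [P [a0 Ha0]]; simpl.
destruct Hc as [Hr [Hs [Ht Hact]]].
exists (actf A s a0); intro x; unfold qact_pred; split.
- intros [a [Pa Hax]]. apply Ha0 in Pa. eapply Ht; [apply Hact; exact Pa| exact Hax].
- intros H. exists a0. split; [apply Ha0, Hr| exact H].
Qed.

Definition qactf (A : act S) (rho : A -> A -> Prop) (Hc : is_congruence rho)
  (s : S) (P : qcar rho) : qcar rho :=
  exist _ (qact_pred rho s (proj1_sig P)) (qact_ok Hc s P).

Lemma qactA (A : act S) (rho : A -> A -> Prop) (Hc : is_congruence rho) s t P :
  qactf Hc s (qactf Hc t P) = qactf Hc (mmul s t) P.
Proof.
apply eq_sig_hprop; [intros; apply proof_irrelevance|].
destruct P as [P [a0 Ha0]]; simpl.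
destruct Hc as [Hr [Hs [Ht Hact]]].
apply functional_extensionality; intro x; apply propositional_extensionality.
unfold qact_pred; split.
- intros [b [[a [Pa Hab]] Hbx]]. exists a; split; [exact Pa|].
  rewrite <- actA. eapply Ht; [apply Hact; exact Hab| exact Hbx].
- intros [a [Pa Hax]]. exists (actf A t a). split.
  + exists a; split; [exact Pa| apply Hr].
  + rewrite actA; exact Hax.
Qed.

Lemma qact1 (A : act S) (rho : A -> A -> Prop) (Hc : is_congruence rho) P :
  qactf Hc (mone S) P = P.
Proof.
apply eq_sig_hprop; [intros; apply proof_irrelevance|].
destruct P as [P [a0 Ha0]]; simpl.
destruct Hc as [Hr [Hs [Ht Hact]]].
apply functional_extensionality; intro x; apply propositional_extensionality.
unfold qact_pred; split.
- intros [a [Pa Hax]]. rewrite act1 in Hax. apply Ha0. apply Ha0 in Pa. eapply Ht; eauto.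
- intros Px. exists x; split; [exact Px| rewrite act1; apply Hr].
Qed.

Definition quot_act (A : act S) (rho : A -> A -> Prop) (Hc : is_congruence rho) : act S :=
  @Act S (qcar rho) (qactf Hc) (@qactA A rho Hc) (@qact1 A rho Hc).

Unset Implicit Arguments.
Record hoehnke := Hoehnke {
  rad :> forall A : act S, A -> A -> Prop;
  rad_cong : forall A : act S, @is_congruence A (rad A);
  rad_hom : forall (A B : act S) (f : A -> B), is_hom f ->
              forall a a', rad A a a' -> rad B (f a) (f a');
  rad_quot : forall A : act S,
      rel_eq (rad (@quot_act A (rad A) (rad_cong A)))
             (@eq (@quot_act A (rad A) (rad_cong A))) }.

Set Implicit Arguments.
(* radical class membership: r(B) = nabla_B *)
Definition in_class (r : forall A : act S, A -> A -> Prop) (B : act S) : Prop :=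
  forall x y : B, r B x y.

Definition rees (A : act S) (rho : A -> A -> Prop) : Prop :=
  is_congruence rho /\
  forall a : A, closed (cls rho a) \/ (forall x, cls rho a x -> x = a).

Definition sigma_sub (r : forall A : act S, A -> A -> Prop)
  (A : act S) (rho : A -> A -> Prop) : Prop :=
  forall (a : A) (H : closed (cls rho a)), nontrivial (cls rho a) -> in_class r (subact H).

Definition system (r : forall A : act S, A -> A -> Prop) (A : act S)
  (Sys : (A -> Prop) -> Prop) : Prop :=
  (forall P, Sys P -> exists H : closed P, nontrivial P /\ in_class r (subact H)) /\
  (forall P Q, Sys P -> Sys Q -> (exists x, P x /\ Q x) -> forall x, P x <-> Q x).

Definition is_KA (r : hoehnke) : Prop :=
  (forall A : act S, rees (r A)) /\
  (forall A : act S, sigma_sub r (r A)) /\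
  (forall (A : act S) (Sys : (A -> Prop) -> Prop), system r Sys ->
     forall B, Sys B ->
       exists a : A, (closed (cls (r A) a) /\ nontrivial (cls (r A) a)) /\
                     (forall x, B x -> cls (r A) a x)).

Definition rk (rh : hoehnke) (A : act S) : A -> A -> Prop :=
  fun x y => forall theta : A -> A -> Prop, is_congruence theta ->
    (forall rho : A -> A -> Prop, rees rho -> sigma_sub rh rho ->
       forall u v, rho u v -> theta u v) ->
    theta x y.

Definition rle (r r' : forall A : act S, A -> A -> Prop) : Prop :=
  forall (A : act S) (x y : A), r A x y -> r' A x y.

Definition same_class (r r' : forall A : act S, A -> A -> Prop) : Prop :=
  forall B : act S, in_class r B <-> in_class r' B.

End Acts.

(* Main.v *)
Require Import Defs.
From Stdlib Require Import FunctionalExtensionality PropExtensionality ProofIrrelevance Classical.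
Set Implicit Arguments.

Lemma sig_eq (A : Type) (P : A -> Prop) (x y : {a | P a}) :
  proj1_sig x = proj1_sig y -> x = y.
Proof. intro H. apply eq_sig_hprop; [intros; apply proof_irrelevance| exact H]. Qed.

Lemma incl_hom (S : monoid) (A : act S) (P Q : A -> Prop) (HP : closed P) (HQ : closed Q)
  (sub : forall x, P x -> Q x) :
  @is_hom S (subact HP) (subact HQ) (fun x => exist Q (proj1_sig x) (sub _ (proj2_sig x))).
Proof. intros s x. apply sig_eq. reflexivity. Qed.
Arguments incl_hom {S A P Q} HP HQ sub.

Lemma incl_rad (S : monoid) (r : hoehnke S) (A : act S) (P Q : A -> Prop)
  (HP : closed P) (HQ : closed Q) (sub : forall x, P x -> Q x) :
  in_class r (subact HP) ->
  forall x y : subact HQ, P (proj1_sig x) -> P (proj1_sig y) -> r _ x y.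
Proof.
intros Hin x y Px Py.
pose proof (rad_hom _ r _ _ _ (incl_hom HP HQ sub) (exist P _ Px) (exist P _ Py) (Hin _ _)) as H.
simpl in H.
replace x with (exist Q (proj1_sig x) (sub (proj1_sig x) Px)) by (apply sig_eq; reflexivity).
replace y with (exist Q (proj1_sig y) (sub (proj1_sig y) Py)) by (apply sig_eq; reflexivity).
exact H.
Qed.
Arguments incl_rad {S} r {A P Q} HP HQ sub Hin x y Px Py.

Lemma incl_top (S : monoid) (r : hoehnke S) (A : act S) (P : A -> Prop) (HP : closed P) :
  in_class r (subact HP) -> forall x y : A, P x -> P y -> r A x y.
Proof.
intros Hin x y Px Py.
assert (Hh : @is_hom S (subact HP) A (fun z => proj1_sig z)) by (intros s z; reflexivity).
exact (rad_hom _ r _ _ _ Hh (exist P _ Px) (exist P _ Py) (Hin _ _)).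
Qed.

Lemma closedT (S : monoid) (B : act S) : closed (A:=B) (fun _ => True).
Proof. intros s x _; exact I. Qed.

Lemma full_class (S : monoid) (r : hoehnke S) (B : act S) :
  in_class r B -> in_class r (subact (closedT B)).
Proof.
intros Hin x y.
assert (Hh : @is_hom S B (subact (closedT B)) (fun z => exist _ z I)) by (intros s z; apply sig_eq; reflexivity).
pose proof (rad_hom _ r _ _ _ Hh (proj1_sig x) (proj1_sig y) (Hin _ _)) as H.
destruct x as [x []]; destruct y as [y []]; exact H.
Qed.

Definition R0 (S : monoid) (r : hoehnke S) (A : act S) (x y : A) : Prop :=
  x = y \/ exists (P : A -> Prop) (H : closed P), P x /\ P y /\ in_class r (subact H).
Arguments R0 {S} r A x y.

Lemma R0_cong (S : monoid) (r : hoehnke S) (A : act S) : is_congruence (R0 r A).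
Proof.
split; [|split; [|split]].
- intro a; left; reflexivity.
- intros a b [->|[P [H [Pa [Pb Hin]]]]]; [left; reflexivity| right; exists P, H; auto].
- intros a b c [->|[P [HP [Pa [Pb HinP]]]]]; [tauto|].
  intros [<-|[Q [HQ [Qb [Qc HinQ]]]]]; [right; exists P, HP; auto|].
  right.
  assert (HPQ : closed (fun x => P x \/ Q x)).
  { intros s x [Px|Qx]; [left; apply HP; exact Px| right; apply HQ; exact Qx]. }
  exists (fun x => P x \/ Q x), HPQ. split; [left; exact Pa|]. split; [right; exact Qc|].
  pose (y0 := exist (fun x => P x \/ Q x) b (or_introl Pb)).
  destruct (rad_cong _ r (subact HPQ)) as [Rr [Rs [Rt _]]].
  assert (Hw : forall w : subact HPQ, r _ w y0).
  { intros [w [Pw|Qw]].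
    - apply (incl_rad r HP HPQ (fun x h => or_introl h) HinP); simpl; auto.
    - apply (incl_rad r HQ HPQ (fun x h => or_intror h) HinQ); simpl; auto. }
  intros u v. apply Rt with y0; [apply Hw| apply Rs, Hw].
- intros s a b [->|[P [H [Pa [Pb Hin]]]]]; [left; reflexivity|].
  right; exists P, H; split; [apply H; exact Pa| split; [apply H; exact Pb| exact Hin]].
Qed.

Lemma R0_rees (S : monoid) (r : hoehnke S) (A : act S) (a : A) :
  closed (cls (R0 r A) a) \/ (forall x, cls (R0 r A) a x -> x = a).
Proof.
destruct (classic (exists x, R0 r A a x /\ x <> a)) as [[x [[->|[P [HP [Pa [Px Hin]]]]] Hne]]|Hn].
- exfalso; apply Hne; reflexivity.
- left. intros s z [<-|[Q [HQ [Qa [Qz HinQ]]]]].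
  + right. exists P, HP. split; [exact Pa| split; [apply HP; exact Pa| exact Hin]].
  + right. exists Q, HQ. split; [exact Qa| split; [apply HQ; exact Qz| exact HinQ]].
- right. intros x Hx. apply NNPP. intro Hne. apply Hn. exists x. auto.
Qed.

Lemma R0_sigma (S : monoid) (r : hoehnke S) (A : act S) : sigma_sub r (R0 r A).
Proof.
intros a H _.
pose (a0 := exist (cls (R0 r A) a) a (or_introl eq_refl)).
destruct (rad_cong _ r (subact H)) as [Rr [Rs [Rt _]]].
assert (Hw : forall w : subact H, r _ w a0).
{ intros [w [Ew|[P [HP [Pa [Pw Hin]]]]]].
  - subst w. replace (exist _ a (or_introl eq_refl)) with a0 by (apply sig_eq; reflexivity). apply Rr.
  - assert (sub : forall x, P x -> cls (R0 r A) a x).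
    { intros x Px. right. exists P, HP. auto. }
    apply (incl_rad r HP H sub Hin); simpl; auto. }
intros u v. apply Rt with a0; [apply Hw| apply Rs, Hw].
Qed.

Lemma R0_max (S : monoid) (r : hoehnke S) (A : act S) (rho : A -> A -> Prop) :
  rees rho -> sigma_sub r rho -> forall u v, rho u v -> R0 r A u v.
Proof.
intros [[Rr [Rs [Rt Rc]]] Hre] Hsig u v Huv.
destruct (classic (u = v)) as [E|Hne]; [left; exact E|].
destruct (Hre u) as [Hcl|Hsing].
- right. exists (cls rho u), Hcl. split; [apply Rr| split; [exact Huv|]].
  apply Hsig. exists u, v. split; [apply Rr| split; [exact Huv| exact Hne]].
- exfalso. apply Hne. symmetry. apply Hsing. exact Huv.
Qed.

Lemma R0_rees' (S : monoid) (r : hoehnke S) (A : act S) : rees (R0 r A).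
Proof. split; [apply R0_cong| apply R0_rees]. Qed.

Lemma rk_iff (S : monoid) (r : hoehnke S) (A : act S) x y : @rk _ r A x y <-> R0 r A x y.
Proof.
split.
- intro H. apply H; [apply R0_cong|]. intros rho Hr Hs. apply R0_max; assumption.
- intros H theta Ht Hall. apply (Hall (R0 r A)); [apply R0_rees'| apply R0_sigma| exact H].
Qed.

Lemma rk_eq (S : monoid) (r : hoehnke S) (A : act S) : @rk _ r A = R0 r A.
Proof.
apply functional_extensionality; intro x; apply functional_extensionality; intro y.
apply propositional_extensionality; apply rk_iff.
Qed.

Lemma rk_cong (S : monoid) (r : hoehnke S) (A : act S) : is_congruence (@rk _ r A).
Proof. rewrite rk_eq. apply R0_cong. Qed.

Lemma R0_le (S : monoid) (r : hoehnke S) (A : act S) x y : R0 r A x y -> r A x y.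
Proof.
intros [->|[P [HP [Px [Py Hin]]]]]; [apply (proj1 (rad_cong _ r A))| exact (@incl_top _ r _ _ HP Hin x y Px Py)].
Qed.

Lemma R0_hom (S : monoid) (r : hoehnke S) (A B : act S) (f : A -> B) :
  is_hom f -> forall a a', R0 r A a a' -> R0 r B (f a) (f a').
Proof.
intros Hf a a' [->|[P [HP [Pa [Pa' Hin]]]]]; [left; reflexivity|].
right.
pose (fP := fun b => exists x, P x /\ f x = b).
assert (HfP : closed fP).
{ intros s b [x [Px <-]]. exists (actf A s x). split; [apply HP; exact Px| apply Hf]. }
exists fP, HfP. split; [exists a; auto| split; [exists a'; auto|]].
assert (Hh : @is_hom S (subact HP) (subact HfP)
   (fun x => exist fP (f (proj1_sig x)) (ex_intro _ (proj1_sig x) (conj (proj2_sig x) eq_refl)))).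
{ intros s x. apply sig_eq. simpl. apply Hf. }
intros [b1 [x1 [Px1 E1]]] [b2 [x2 [Px2 E2]]].
pose proof (rad_hom _ r _ _ _ Hh (exist P x1 Px1) (exist P x2 Px2) (Hin _ _)) as H.
assert (E : forall (u u' v v' : subact HfP), proj1_sig u = proj1_sig u' -> proj1_sig v = proj1_sig v' -> r _ u v -> r _ u' v').
{ intros u u' v v' e1 e2 h. apply sig_eq in e1. apply sig_eq in e2. subst. exact h. }
eapply E; [| |exact H]; simpl; assumption.
Qed.

Lemma rk_hom (S : monoid) (r : hoehnke S) (A B : act S) (f : A -> B) :
  is_hom f -> forall a a', @rk _ r A a a' -> @rk _ r B (f a) (f a').
Proof. rewrite !rk_eq. apply R0_hom. Qed.

Definition cl (S : monoid) (A : act S) (rho : A -> A -> Prop) (a : A) : qcar rho :=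
  exist _ (rho a) (ex_intro _ a (fun x => iff_refl (rho a x))).
Arguments cl {S A} rho a.

Lemma ext (S : monoid) (r : hoehnke S) (A : act S) (rho : A -> A -> Prop) (Hc : is_congruence rho)
  (Hrho : forall x y, rho x y <-> R0 r A x y)
  (Q : quot_act Hc -> Prop) (HQ : closed Q) (HinQ : in_class r (subact HQ)) :
  exists HP : closed (fun a => Q (cl rho a)), in_class r (subact HP).
Proof.
pose proof Hc as [Rr [Rs [Rt Rc]]].
assert (F1 : forall s a, cl rho (actf A s a) = qactf Hc s (cl rho a)).
{ intros s a. apply sig_eq. simpl. apply functional_extensionality; intro x.
  apply propositional_extensionality. unfold qact_pred. split.
  - intro h. exists a. split; [apply Rr| exact h].
  - intros [b [hab hb]]. eapply Rt; [apply Rc; exact hab| exact hb]. }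
assert (F2 : forall a b, rho a b -> cl rho a = cl rho b).
{ intros a b hab. apply sig_eq. simpl. apply functional_extensionality; intro x.
  apply propositional_extensionality. split; intro h.
  - eapply Rt; [apply Rs; exact hab| exact h].
  - eapply Rt; [exact hab| exact h]. }
assert (F3 : forall (X : qcar rho) a, (forall x, proj1_sig X x <-> rho a x) -> X = cl rho a).
{ intros X a h. apply sig_eq. simpl. apply functional_extensionality; intro x.
  apply propositional_extensionality. apply h. }
set (P := fun a => Q (cl rho a)).
assert (HP : closed P).
{ intros s a Pa. unfold P. rewrite F1. apply HQ. exact Pa. }
exists HP.
assert (Pclos : forall a b, P a -> rho a b -> P b).
{ intros a b Pa hab. unfold P. rewrite <- (F2 _ _ hab). exact Pa. }
pose proof (rad_cong _ r (subact HP)) as [Pr [Ps [Pt Pc]]].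
assert (F4 : forall x y : subact HP, rho (proj1_sig x) (proj1_sig y) -> r _ x y).
{ intros x y hxy. apply Hrho in hxy. destruct hxy as [E|[P' [HP' [P'x [P'y Hin']]]]].
  - apply sig_eq in E. subst. apply Pr.
  - assert (sub : forall w, P' w -> P w).
    { intros w Pw. apply (Pclos (proj1_sig x)); [exact (proj2_sig x)|].
      apply Hrho. right. exists P', HP'. auto. }
    exact (incl_rad r HP' HP sub Hin' x y P'x P'y). }
pose (gpred := fun (q : subact HQ) (y : subact HP) =>
   exists x : subact HP, proj1_sig (proj1_sig q) (proj1_sig x) /\ r _ x y).
assert (gex : forall q, exists x0, forall y, gpred q y <-> r _ x0 y).
{ intros [[X [a Ha]] Hq].
  assert (Pa : P a).
  { unfold P. rewrite <- (F3 (exist _ X (ex_intro _ a Ha)) a Ha). exact Hq. }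
  exists (exist P a Pa). intro y. unfold gpred; simpl. split.
  - intros [x [hx hxy]]. apply Pt with x; [| exact hxy]. apply F4. simpl. apply Ha. exact hx.
  - intro h. exists (exist P a Pa). split; [apply Ha; apply Rr| exact h]. }
pose (g := fun q => exist (fun Z => exists x0, forall y, Z y <-> r _ x0 y) (gpred q) (gex q)
   : quot_act (rad_cong _ r (subact HP))).
assert (ghom : is_hom g).
{ intros s q. apply sig_eq. simpl. apply functional_extensionality; intro y.
  apply propositional_extensionality. unfold gpred, qact_pred; simpl. split.
  - intros [x [[a' [Xa' ha']] hxy]].
    assert (Pa' : P a').
    { destruct q as [[X [a Ha]] Hq]. simpl in Xa'.
      assert (Pa : P a).
      { unfold P. rewrite <- (F3 (exist _ X (ex_intro _ a Ha)) a Ha). exact Hq. }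
      apply (Pclos a); [exact Pa| apply Ha; exact Xa']. }
    exists (exist P a' Pa'). split.
    + exists (exist P a' Pa'). split; [exact Xa'| apply Pr].
    + apply Pt with x; [| exact hxy]. apply F4. exact ha'.
  - intros [z [[x [Xx hxz]] hzy]].
    exists (sub_actf HP s x). split.
    + exists (proj1_sig x). split; [exact Xx| apply Rr].
    + apply Pt with (sub_actf HP s z); [| exact hzy]. apply (Pc s x z). exact hxz. }
intros x y.
pose (qx := exist Q (cl rho (proj1_sig x)) (proj2_sig x) : subact HQ).
pose (qy := exist Q (cl rho (proj1_sig y)) (proj2_sig y) : subact HQ).
pose proof (rad_hom _ r _ _ g ghom qx qy (HinQ qx qy)) as H.
apply (rad_quot _ r) in H.
assert (Hgy : gpred qy y).
{ exists y. split; [simpl; apply Rr| apply Pr]. }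
assert (E : gpred qx = gpred qy) by exact (f_equal (@proj1_sig _ _) H).
rewrite <- E in Hgy. destruct Hgy as [x' [hx' hx'y]].
apply Pt with x'; [apply F4; exact hx'| exact hx'y].
Qed.

Lemma rk_quot (S : monoid) (r : hoehnke S) (A : act S) (Hc : is_congruence (@rk _ r A)) :
  rel_eq (@rk _ r (quot_act Hc)) eq.
Proof.
pose proof Hc as [Rr [Rs [Rt Rc]]].
intros X Y; split; [|intros ->; apply (proj1 (rk_cong r (quot_act Hc)))].
intro h. apply rk_iff in h. destruct h as [E|[Q [HQ [QX [QY HinQ]]]]]; [exact E|].
destruct (@ext S r A _ Hc (@rk_iff _ r A) Q HQ HinQ) as [HP HinP].
destruct X as [X [a Ha]], Y as [Y [b Hb]].
assert (ea : exist (fun P => exists a, forall x, P x <-> rk r a x) X (ex_intro _ a Ha) = cl (@rk _ r A) a).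
{ apply sig_eq; simpl; apply functional_extensionality; intro x; apply propositional_extensionality; apply Ha. }
assert (eb : exist (fun P => exists a, forall x, P x <-> rk r a x) Y (ex_intro _ b Hb) = cl (@rk _ r A) b).
{ apply sig_eq; simpl; apply functional_extensionality; intro x; apply propositional_extensionality; apply Hb. }
rewrite ea in QX |- *. rewrite eb in QY |- *.
assert (hab : rk r a b).
{ apply rk_iff. right. exists _, HP. auto. }
apply sig_eq. simpl. apply functional_extensionality; intro x; apply propositional_extensionality.
split; intro h.
- eapply Rt; [apply Rs; exact hab| exact h].
- eapply Rt; [exact hab| exact h].
Qed.

Definition rkH (S : monoid) (r : hoehnke S) : hoehnke S :=
  @Hoehnke S (rk r) (rk_cong r) (@rk_hom S r) (fun A => @rk_quot S r A (rk_cong r A)).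

Lemma in_class_rk (S : monoid) (r : hoehnke S) (B : act S) :
  in_class (rkH r) B <-> in_class r B.
Proof.
split.
- intros H x y. apply R0_le. apply rk_iff. apply H.
- intros H x y. simpl. apply rk_iff. right. exists (fun _ => True), (closedT B).
  split; [exact I| split; [exact I|]]. apply full_class. exact H.
Qed.

Lemma rkH_KA (S : monoid) (r : hoehnke S) : is_KA (rkH r).
Proof.
split; [|split].
- intro A. simpl. rewrite rk_eq. apply R0_rees'.
- intro A. intros a H Hnt. apply (proj2 (in_class_rk r _)).
  revert H Hnt. simpl. rewrite rk_eq. intros H Hnt.
  apply (@R0_sigma _ r A a H Hnt).
- intros A Sys [Hsys _] B HB.
  destruct (Hsys B HB) as [HcB [[x [y [Bx [By Hne]]]] HinB]].
  apply (proj1 (in_class_rk r _)) in HinB.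
  exists x. simpl. rewrite rk_eq.
  assert (sub : forall z, B z -> R0 r A x z).
  { intros z Bz. right. exists B, HcB. auto. }
  split; [split|].
  + destruct (R0_rees r A x) as [Hcl|Hs]; [exact Hcl|].
    exfalso. apply Hne. symmetry. apply Hs. apply sub. exact By.
  + exists x, y. split; [apply sub; exact Bx| split; [apply sub; exact By| exact Hne]].
  + exact sub.
Qed.

Lemma rk_le (S : monoid) (r : hoehnke S) : rle (rk r) r.
Proof. intros A x y h. apply R0_le. apply rk_iff. exact h. Qed.

Theorem proposition2p5 (S : monoid) (rh : hoehnke S) :
  (* (1) r_k is the least upper bound of the KA radicals below r_h *)
  ((forall r : hoehnke S, is_KA r -> rle r rh -> rle r (rk rh)) /\
   (forall r' : forall A : act S, A -> A -> Prop,
      (forall r : hoehnke S, is_KA r -> rle r rh -> rle r r') -> rle (rk rh) r'))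
  /\
  (* (2) r_k is the greatest lower bound of the Hoehnke radicals with class R_{r_h} *)
  ((forall r : hoehnke S, same_class r rh -> rle (rk rh) r) /\
   (forall r' : forall A : act S, A -> A -> Prop,
      (forall r : hoehnke S, same_class r rh -> rle r' r) -> rle r' (rk rh))).
Proof.
split; split.
- intros r [Hrees [Hsig _]] Hle A x y h. apply rk_iff.
  apply (R0_max rh (rho := r A)); [apply Hrees| | exact h].
  intros a H Hnt u v. apply Hle. exact (Hsig A a H Hnt u v).
- intros r' Hall. exact (Hall (rkH rh) (@rkH_KA _ rh) (@rk_le _ rh)).
- intros r Hsc A x y h. apply rk_iff in h.
  destruct h as [->|[P [HP [Px [Py Hin]]]]]; [apply (proj1 (rad_cong _ r A))|].
  apply (@incl_top _ r _ _ HP); [| exact Px| exact Py].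
  apply Hsc. exact Hin.
- intros r' Hall. apply (Hall (rkH rh)).
  intro B. apply in_class_rk.
Qed.
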